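(* For every multiterminal source $X_{\mathcal M}$, $$R_{\mathrm{SK}}\ \ge\ R_{\mathrm{CI}}\ \ge\ \mathrm{CI}(X_{\mathcal M})-\mathbf I(X_{\mathcal M}).$$
   Context: Multiterminal source model. Let $\mathcal M=\{1,\dots,m\}$, $m\ge 2$. Let $X_{\mathcal M}=(X_1,\dots,X_m)$ be jointly distributed random variables on finite alphabets. For $A\subseteq\mathcal M$ write $X_A=(X_i:i\in A)$. For $n\in\mathbb N$, $X^n_{\mathcal M}$ consists of $n$ i.i.d. copies of $X_{\mathcal M}$, and $X_A^n=(X_i^n:i\in A)$. Logarithms are base 2. An interactive communication $\mathbf F$ (depending on $n$) is a finite sequence of transmissions; each transmission is sent by some terminal $i$ and is a deterministic function of $X_i^n$ and the previous transmissions. Its range is the finite set $\mathcal F$. A common randomness (CR) obtained from $\mathbf F$ is a sequence $\mathbf J=\mathbf J^{(n)}$ of functions of $X^n_{\mathcal M}$ such that for every $0<\epsilon<1$ and all sufficiently large $n$ there exist $J_i=J_i(X_i^n,\mathbf F)$, $i\in\mathcal M$, with $\Pr[J_1=\cdots=J_m=\mathbf J]\ge1-\epsilon$. A secret key (SK) obtained from $\mathbf F$ with rate $R$ is a CR $\mathbf K$ obtained from $\mathbf F$ such that for every $\epsilon>0$ and all large $n$, $I(\mathbf K;\mathbf F)\le\epsilon$ and $\frac1nH(\mathbf K)\ge R-\epsilon$. For a partition $\mathcal P$ of $\mathcal M$ with $|\mathcal P|\ge2$ let $\Delta(\mathcal P)=\frac{1}{|\mathcal P|-1}[\sum_{A\in\mathcal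 P}H(X_A)-H(X_{\mathcal M})]$, and let $\mathbf I(X_{\mathcal M})=\min_{\mathcal P}\Delta(\mathcal P)$. This quantity equals the SK capacity, i.e. the supremum of achievable SK rates. $R_{\mathrm{SK}}$ is the infimum of reals $R\ge0$ such that for every $\epsilon>0$ and all sufficiently large $n$ there exist an interactive communication $\mathbf F$ with $\frac1n\log|\mathcal F|\le R+\epsilon$ and an SK $\mathbf K$ obtained from $\mathbf F$ with $\frac1nH(\mathbf K)\ge\mathbf I(X_{\mathcal M})-\epsilon$. For a random variable $\mathbf L$, define $$\mathbf I(X^n_{\mathcal M}|\mathbf L)=\max_{\mathcal P^*}\frac{1}{|\mathcal P^*|-1}\Big[\sum_{A\in\mathcal P^*}H(X^n_A|\mathbf L)-H(X^n_{\mathcal M}|\mathbf L)\Big],$$ the maximum being over the partitions $\mathcal P^*$ minimizing $\Delta$. A Wyner common information ($\mathrm{CI}_W$) is a sequence of finite-valued functions $\mathbf L^{(n)}(X^n_{\mathcal M})$ with $\frac1n\mathbf I(X^n_{\mathcal M}|\mathbf L^{(n)})\to0$. An interactive common information (CI) is a $\mathrm{CI}_W$ of the form $(\mathbf J,\mathbf F)$, where $\mathbf F$ is an interactive communication and $\mathbf J$ is a CR obtained from $\mathbf F$. $R$ is an achievable CI rate if some CI $\mathbf L$ satisfies, for every $\epsilon>0$, $\frac1nH(\mathbf L)\le R+\epsilon$ for all large $n$; $\mathrm{CI}(X_{\mathcal M})$ is the infimum of achievable CI rates. $R_{\mathrm{CI}}$ is the infimum of reals $R\ge0$ such that for every $\epsilon>0$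 and all large $n$ there exist an interactive communication $\mathbf F$ with $\frac1n\log|\mathcal F|\le R+\epsilon$ and a CR $\mathbf J$ such that $(\mathbf J,\mathbf F)$ is a CI. *)

(* Defs.v *)
From Stdlib Require Import Reals.
From mathcomp Require Import all_boot.
Set Implicit Arguments. Unset Strict Implicit. Unset Printing Implicit Defensive.
Open Scope R_scope.

Definition log2 (x : R) : R := ln x / ln 2.

Definition Rleb (x y : R) : bool := if Rle_dec x y then true else false.

(* Entropy of a "random variable" on a finite probability space (T, Q),
   represented by the equivalence relation e it induces (w ~ w' iff the
   variable takes the same value at w and w'):
     H = - sum_w Q(w) log2 Q([w]_e)  =  E[-log2 Pr(variable = its value)].
   Terms with Q w = 0 vanish (0 * anything = 0). *)
Definition ent (T : finType) (Q : T -> R) (e : rel T) : R :=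
  - \big[Rplus/0]_(w : T) (Q w * log2 (\big[Rplus/0]_(w' : T | e w w') Q w')).

Definition relf (T : Type) (U : eqType) (g : T -> U) : rel T :=
  fun w w' => g w == g w'.
(* joint random variable (pair) *)
Definition relI (T : Type) (e1 e2 : rel T) : rel T :=
  fun w w' => e1 w w' && e2 w w'.

(* Infima in [-oo,+oo] with inf of the empty set = +oo :
   inf_le A B  <->  inf A <= inf B. *)
Definition inf_le (A B : R -> Prop) : Prop :=
  forall b, B b -> forall eps, 0 < eps -> exists a, A a /\ a <= b + eps.

Section Source.
Variable m : nat.
Variable X : 'I_m -> finType.

Definition Omega : finType := {dffun forall i : 'I_m, X i}.
Variable P : Omega -> R.

Definition OmegaN (n : nat) : finType := {ffun 'I_n -> Omega}.
Definition PN (n : nat) (w : OmegaN n) : R := \big[Rmult/1]_(k < n) P (w k).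
Definition Prob (n : nat) (E : pred (OmegaN n)) : R :=
  \big[Rplus/0]_(w : OmegaN n | E w) PN w.

Definition obs (n : nat) (i : 'I_m) (w : OmegaN n) : {ffun 'I_n -> X i} :=
  [ffun k => w k i].
Definition relA (n : nat) (A : {set 'I_m}) : rel (OmegaN n) :=
  fun w w' => [forall i in A, obs i w == obs i w'].

Definition Hn (n : nat) (e : rel (OmegaN n)) : R := ent (@PN n) e.
Definition condHn (n : nat) (e l : rel (OmegaN n)) : R :=
  Hn (relI e l) - Hn l.
Definition MIn (n : nat) (e1 e2 : rel (OmegaN n)) : R :=
  Hn e1 + Hn e2 - Hn (relI e1 e2).

Definition H1 (A : {set 'I_m}) : R :=
  ent P (fun x y => [forall i in A, x i == y i]).

Definition validp (Q : {set {set 'I_m}}) : bool :=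
  partition Q [set: 'I_m] && (1 < #|Q|)%N.

Definition Delta (Q : {set {set 'I_m}}) : R :=
  / INR (#|Q| - 1)%N * (\big[Rplus/0]_(A in Q) H1 A - H1 [set: 'I_m]).

Definition Pfine : {set {set 'I_m}} := [set [set i] | i in [set: 'I_m]].

Definition Icap : R := \big[Rmin/Delta Pfine]_(Q | validp Q) Delta Q.

Definition minimizer (Q : {set {set 'I_m}}) : bool :=
  validp Q && Rleb (Delta Q) Icap.

(* I(X^n_M | L): max over minimizing partitions P*. The maximum is taken
   with initial value 0, which is harmless since every term is >= 0
   (sum_A H(X_A|L) >= H(X_M|L)) and minimizers exist. *)
Definition condMI (n : nat) (l : rel (OmegaN n)) : R :=
  \big[Rmax/0]_(Q | minimizer Q)
     (/ INR (#|Q| - 1)%N *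
       (\big[Rplus/0]_(A in Q) condHn (@relA n A) l - condHn (@relA n [set: 'I_m]) l)).

(* Interactive communication at blocklength n: a finite sequence of
   transmissions; each is sent by some terminal i and is a deterministic
   function of X_i^n and of the previous transmissions (values encoded in nat). *)
Definition step (n : nat) : Type :=
  {i : 'I_m & ({ffun 'I_n -> X i} -> seq nat -> nat)}.

Fixpoint run (n : nat) (p : seq (step n)) (w : OmegaN n) (acc : seq nat)
  : seq nat :=
  match p with
  | [::] => acc
  | s :: p' => run p' w (rcons acc (projT2 s (obs (projT1 s) w) acc))
  end.

Definition transcript (n : nat) (p : seq (step n)) (w : OmegaN n) : seq nat :=
  run p w [::].

Definition commSize (n : nat) (p : seq (step n)) : nat :=
  size (undup [seq transcript p w | w <- enum (OmegaN n)]).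

Definition Comm : Type := forall n : nat, seq (step n).
Definition RVseq : Type := forall n : nat, OmegaN n -> nat.

Definition isCR (F : Comm) (J : RVseq) : Prop :=
  forall eps, 0 < eps < 1 -> exists N, forall n, (N <= n)%N ->
    exists Ji : forall i : 'I_m, {ffun 'I_n -> X i} -> seq nat -> nat,
      Prob (fun w => [forall i, Ji i (obs i w) (transcript (F n) w) == J n w])
        >= 1 - eps.

Definition isSK (F : Comm) (K : RVseq) (Rt : R) : Prop :=
  isCR F K /\
  forall eps, 0 < eps -> exists N, forall n, (N <= n)%N ->
    MIn (relf (K n)) (relf (transcript (F n))) <= eps /\
    / INR n * Hn (relf (K n)) >= Rt - eps.

Definition Lrel (F : Comm) (J : RVseq) (n : nat) : rel (OmegaN n) :=
  relI (relf (J n)) (relf (transcript (F n))).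

Definition isCIW (L : forall n, rel (OmegaN n)) : Prop :=
  Un_cv (fun n => / INR n * condMI (L n)) 0.

Definition isCI (F : Comm) (J : RVseq) : Prop :=
  isCR F J /\ isCIW (Lrel F J).

Definition rate_le (F : Comm) (Rt : R) : Prop :=
  forall eps, 0 < eps -> exists N, forall n, (N <= n)%N ->
    / INR n * log2 (INR (commSize (F n))) <= Rt + eps.

(* the set whose infimum is R_SK *)
Definition SKcommSet (Rt : R) : Prop :=
  0 <= Rt /\ exists (F : Comm) (K : RVseq), rate_le F Rt /\ isSK F K Icap.

(* the set whose infimum is R_CI *)
Definition CIcommSet (Rt : R) : Prop :=
  0 <= Rt /\ exists (F : Comm) (J : RVseq), rate_le F Rt /\ isCI F J.

(* achievable CI rates; CI(X_M) is the infimum *)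
Definition CIrateSet (Rt : R) : Prop :=
  exists (F : Comm) (J : RVseq), isCI F J /\
    forall eps, 0 < eps -> exists N, forall n, (N <= n)%N ->
      / INR n * Hn (@Lrel F J n) <= Rt + eps.

End Source.

(* Main.v *)
Require Import Defs.
From Stdlib Require Import Reals.
From mathcomp Require Import all_boot.
Open Scope R_scope.
From Stdlib Require Import Lra.
From HB Require Import structures.
Set Warnings "-notation-overridden".
Set Implicit Arguments. Unset Strict Implicit.

Lemma Rpa : associative Rplus. Proof. move=> x y z; ring. Qed.
Lemma Rpc : commutative Rplus. Proof. move=> x y; ring. Qed.
Lemma Rp0 : left_id 0 Rplus. Proof. move=> x; ring. Qed.
HB.instance Definition _ := Monoid.isComLaw.Build R 0 Rplus Rpa Rpc Rp0.
Lemma Rma : associative Rmult. Proof. move=> x y z; ring. Qed.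
Lemma Rmc : commutative Rmult. Proof. move=> x y; ring. Qed.
Lemma Rm1 : left_id 1 Rmult. Proof. move=> x; ring. Qed.
HB.instance Definition _ := Monoid.isComLaw.Build R 1 Rmult Rma Rmc Rm1.
Lemma Rm0l : left_zero 0 Rmult. Proof. move=> x; ring. Qed.
Lemma Rm0r : right_zero 0 Rmult. Proof. move=> x; ring. Qed.
HB.instance Definition _ := Monoid.isMulLaw.Build R 0 Rmult Rm0l Rm0r.
Lemma Rdl : left_distributive Rmult Rplus. Proof. move=> x y z; ring. Qed.
Lemma Rdr : right_distributive Rmult Rplus. Proof. move=> x y z; ring. Qed.
HB.instance Definition _ := Monoid.isAddLaw.Build R Rmult Rplus Rdl Rdr.

Notation "\sR_ ( i : T ) F" := (\big[Rplus/0]_(i : T) F) (at level 36, i at level 50, F at level 36).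

Lemma sum_ge0 (I : Type) (r : seq I) (P : pred I) (F : I -> R) :
  (forall i, P i -> 0 <= F i) -> 0 <= \big[Rplus/0]_(i <- r | P i) F i.
Proof. move=> h; apply: big_ind => //; [lra | move=> *; lra]. Qed.

Lemma sum_le (I : Type) (r : seq I) (P : pred I) (F G : I -> R) :
  (forall i, P i -> F i <= G i) ->
  \big[Rplus/0]_(i <- r | P i) F i <= \big[Rplus/0]_(i <- r | P i) G i.
Proof. move=> h; apply: big_ind2 => //; [lra | move=> *; lra]. Qed.

Lemma sum_sub (I : finType) (P P' : pred I) (F : I -> R) :
  (forall i, 0 <= F i) -> (forall i, P i -> P' i) ->
  \big[Rplus/0]_(i | P i) F i <= \big[Rplus/0]_(i | P' i) F i.
Proof.
move=> h0 hs; rewrite [X in _ <= X](bigID P) /=.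
have -> : \big[Rplus/0]_(i | P' i && P i) F i = \big[Rplus/0]_(i | P i) F i.
  apply: eq_bigl => i; case E: (P i); last by rewrite andbF.
  by rewrite andbT hs.
have := @sum_ge0 _ (index_enum I) (fun i => P' i && ~~ P i) F (fun i _ => h0 i). lra.
Qed.

Lemma sum_const_R (I : finType) (c : R) :
  \big[Rplus/0]_(i : I) c = INR #|I| * c.
Proof.
rewrite big_const; elim: #|I| => [|k IH]; first by rewrite /= Rmult_0_l.
rewrite iterS IH S_INR; ring.
Qed.

Lemma sum_distrr (I : Type) (r : seq I) (P : pred I) (F : I -> R) c :
  \big[Rplus/0]_(i <- r | P i) (c * F i) = c * \big[Rplus/0]_(i <- r | P i) F i.
Proof. by rewrite big_distrr. Qed.

Lemma sum_distrl (I : Type) (r : seq I) (P : pred I) (F : I -> R) c :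
  \big[Rplus/0]_(i <- r | P i) (F i * c) = (\big[Rplus/0]_(i <- r | P i) F i) * c.
Proof. by rewrite big_distrl. Qed.

Lemma sum_split (I : Type) (r : seq I) (P : pred I) (F G : I -> R) :
  \big[Rplus/0]_(i <- r | P i) (F i + G i) =
  \big[Rplus/0]_(i <- r | P i) F i + \big[Rplus/0]_(i <- r | P i) G i.
Proof. by rewrite big_split. Qed.

Lemma sum_opp (I : Type) (r : seq I) (P : pred I) (F : I -> R) :
  \big[Rplus/0]_(i <- r | P i) (- F i) = - \big[Rplus/0]_(i <- r | P i) F i.
Proof.
apply: (big_ind2 (fun x y => x = - y)); [lra | move=> ? ? ? ? -> ->; lra | done].
Qed.

Definition log2_pos x : 0 < x -> True := fun _ => I.

Lemma ln2_pos : 0 < ln 2.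
Proof. have := ln_lt_2; lra. Qed.

Lemma log2_mult x y : 0 < x -> 0 < y -> log2 (x * y) = log2 x + log2 y.
Proof. move=> hx hy; rewrite /log2 ln_mult //; field; have := ln2_pos; lra. Qed.

Lemma log2_inv x : 0 < x -> log2 (/ x) = - log2 x.
Proof. move=> hx; rewrite /log2 ln_Rinv //; field; have := ln2_pos; lra. Qed.

Lemma log2_le x y : 0 < x -> x <= y -> log2 x <= log2 y.
Proof.
move=> hx hxy; rewrite /log2; apply: Rmult_le_compat_r.
  by apply: Rlt_le; apply: Rinv_0_lt_compat; apply: ln2_pos.
case: (Rle_lt_or_eq_dec _ _ hxy) => [h|->]; last lra.
by apply: Rlt_le; apply: ln_increasing.
Qed.

Lemma log2_1 : log2 1 = 0.
Proof. by rewrite /log2 ln_1 /Rdiv Rmult_0_l. Qed.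

Lemma log2_2 : log2 2 = 1.
Proof. rewrite /log2; field; have := ln2_pos; lra. Qed.

Lemma log2_bound x : 0 < x -> log2 x <= (x - 1) / ln 2.
Proof.
move=> hx; rewrite /log2; apply: Rmult_le_compat_r.
  by apply: Rlt_le; apply: Rinv_0_lt_compat; apply: ln2_pos.
have := exp_ineq1_le (ln x); rewrite exp_ln //; lra.
Qed.

Section Gen.
Variable T : finType.
Variable Q : T -> R.
Hypothesis Q0 : forall w, 0 <= Q w.
Implicit Types e : rel T.

Definition qE (e : rel T) (w : T) : R := \big[Rplus/0]_(w' : T | e w w') Q w'.

Lemma entE e : ent Q e = - \big[Rplus/0]_(w : T) (Q w * log2 (qE e w)).
Proof. by []. Qed.

Definition eqv (e : rel T) :=
  [/\ (forall x, e x x), (forall x y, e x y -> e y x) & (forall x y z, e x y -> e y z -> e x z)].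

Lemma qE_ge0 e w : 0 <= qE e w.
Proof. by apply: sum_ge0 => i _; apply: Q0. Qed.

Lemma qE_ge e w : e w w -> Q w <= qE e w.
Proof.
move=> h; rewrite /qE (bigD1 w) //=.
have := @sum_ge0 _ (index_enum T) (fun i => e w i && (i != w)) Q (fun i _ => Q0 i). lra.
Qed.

Lemma qE_pos e w : e w w -> 0 < Q w -> 0 < qE e w.
Proof. move=> h1 h2; have := @qE_ge e w h1; lra. Qed.

Lemma qE_inv e w u : eqv e -> e w u -> qE e w = qE e u.
Proof.
case=> r s t h; apply: eq_bigl => w'; apply/idP/idP => h2.
  by apply: t (s _ _ h) h2.
by apply: t h h2.
Qed.

Lemma Q_cases w : Q w = 0 \/ 0 < Q w.
Proof. have := Q0 w; lra. Qed.

Lemma ent_ext e e' : (forall w w', e w w' = e' w w') -> ent Q e = ent Q e'.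
Proof.
move=> h; rewrite !entE; congr (- _); apply: eq_bigr => w _; congr (_ * log2 _).
by apply: eq_bigl => w'; rewrite h.
Qed.

Lemma ent_mono e e' : (forall w, e w w) -> (forall w w', e w w' -> e' w w') ->
  ent Q e' <= ent Q e.
Proof.
move=> hr h; rewrite !entE; apply: Ropp_le_contravar; apply: sum_le => w _.
case: (Q_cases w) => [->|hq]; first lra.
apply: Rmult_le_compat_l; first lra.
apply: log2_le; first by apply: qE_pos.
by apply: sum_sub => // w'; apply: h.
Qed.

Lemma gibbs (x : T -> R) : (forall w, 0 < Q w -> 0 < x w) ->
  \big[Rplus/0]_(w : T) (Q w * x w) <= \big[Rplus/0]_(w : T) Q w ->
  \big[Rplus/0]_(w : T) (Q w * log2 (x w)) <= 0.
Proof.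
move=> hx hs.
apply: (Rle_trans _ (\big[Rplus/0]_(w : T) (Q w * x w - Q w) / ln 2)).
  rewrite /Rdiv -sum_distrl; apply: sum_le => w _.
  case: (Q_cases w) => [->|hq]; first lra.
  have := @log2_bound (x w) (hx w hq); rewrite /Rdiv => h.
  have -> : (Q w * x w - Q w) * / ln 2 = Q w * ((x w - 1) * / ln 2) by ring.
  apply: Rmult_le_compat_l; lra.
rewrite /Rdiv.
have -> : \big[Rplus/0]_(w : T) (Q w * x w - Q w) =
  \big[Rplus/0]_(w : T) (Q w * x w) - \big[Rplus/0]_(w : T) Q w.
  by rewrite /Rminus sum_split sum_opp.
have := Rinv_0_lt_compat _ ln2_pos; nra.
Qed.

End Gen.

Section Gen2.
Variable T : finType.
Variable Q : T -> R.
Hypothesis Q0 : forall w, 0 <= Q w.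
Implicit Types e a b c : rel T.

Lemma eqvI a b : eqv a -> eqv b -> eqv (relI a b).
Proof.
case=> ra sa ta [rb sb tb]; split => [x|x y|x y z]; rewrite /relI.
- by rewrite ra rb.
- by case/andP => /sa -> /sb ->.
- by case/andP => h1 h2 /andP [h3 h4]; rewrite (ta _ _ _ h1 h3) (tb _ _ _ h2 h4).
Qed.

Lemma eqv_refl e : eqv e -> forall x, e x x.
Proof. by case. Qed.

Lemma sum4 (F1 F2 F3 F4 : T -> R) :
  \big[Rplus/0]_(w : T) (F1 w + F2 w - F3 w - F4 w) =
  \big[Rplus/0]_(w : T) F1 w + \big[Rplus/0]_(w : T) F2 w
  - \big[Rplus/0]_(w : T) F3 w - \big[Rplus/0]_(w : T) F4 w.
Proof. by rewrite /Rminus !sum_split !sum_opp. Qed.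

Lemma sum_mkcond (P : pred T) (F : T -> R) :
  \big[Rplus/0]_(i | P i) F i = \big[Rplus/0]_(i : T) (if P i then F i else 0).
Proof. exact: big_mkcond. Qed.

Lemma term_le_sum (P : pred T) (F : T -> R) i :
  (forall j, 0 <= F j) -> P i -> F i <= \big[Rplus/0]_(j | P j) F j.
Proof.
move=> h hi; rewrite (bigD1 i) //=.
have := @sum_ge0 _ (index_enum T) (fun j => P j && (j != i)) F (fun j _ => h j). lra.
Qed.

Lemma Rinv_ge0 x : 0 <= x -> 0 <= / x.
Proof.
move=> h; case: (Rle_lt_or_eq_dec _ _ h) => [h1|<-]; last by rewrite Rinv_0; lra.
by apply: Rlt_le; apply: Rinv_0_lt_compat.
Qed.

Lemma sum_prod_exp (F G : T -> R) :
  (\big[Rplus/0]_(u : T) F u) * (\big[Rplus/0]_(v : T) G v) =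
  \big[Rplus/0]_(u : T) \big[Rplus/0]_(v : T) (F u * G v).
Proof. rewrite big_distrl; apply: eq_bigr => u _; by rewrite big_distrr. Qed.

Lemma submod_sum a b c : eqv a -> eqv b -> eqv c ->
  \big[Rplus/0]_(w : T) (Q w * (qE Q (relI a c) w * qE Q (relI b c) w *
     / (qE Q (relI (relI a b) c) w * qE Q c w))) <= \big[Rplus/0]_(w : T) Q w.
Proof.
move=> ea eb ec; have [ra sa ta] := ea; have [rb sb tb] := eb; have [rc sc tc] := ec.
set qc := qE Q c; set qabc := qE Q (relI (relI a b) c).
pose G w u v := Q w * ((if relI a c w u then Q u else 0) * (if relI b c w v then Q v else 0))
   * / (qabc w * qc w).
have -> : \big[Rplus/0]_(w : T) (Q w * (qE Q (relI a c) w * qE Q (relI b c) w *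
     / (qabc w * qc w))) = (\big[Rplus/0]_(w : T) \big[Rplus/0]_(u : T) \big[Rplus/0]_(v : T) G w u v).
  apply: eq_bigr => w _; rewrite /qE (sum_mkcond (relI a c w)) (sum_mkcond (relI b c w)) sum_prod_exp; cbv beta.
  transitivity ((Q w * / (qabc w * qc w)) *
    \big[Rplus/0]_(u : T) \big[Rplus/0]_(v : T)
       ((if relI a c w u then Q u else 0) * (if relI b c w v then Q v else 0))).
  ring.
  rewrite -sum_distrr; apply: eq_bigr => u _; rewrite -sum_distrr; apply: eq_bigr => v _.
  rewrite /G; ring.
rewrite exchange_big /=.
apply: sum_le => u _.
rewrite exchange_big /=.
pose RH v := if c u v then Q u * Q v * / qc u else 0.
have hin : forall v, \big[Rplus/0]_(w : T) G w u v <= RH v.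
  move=> v.
  pose S := \big[Rplus/0]_(w | relI a c w u && relI b c w v) Q w.
  have hS0 : 0 <= S by apply: sum_ge0 => *; apply: Q0.
  pose K := Q u * Q v * / (S * qc u).
  apply: (Rle_trans _ (\big[Rplus/0]_(w : T)
            ((if relI a c w u && relI b c w v then Q w else 0) * K))).
    apply: sum_le => w _; rewrite /G.
    case E1: (relI a c w u); case E2: (relI b c w v) => /=;
      try (rewrite ?Rmult_0_l ?Rmult_0_r; lra).
    have hcw : c w u by move: E1; rewrite /relI => /andP [].
    have -> : qc w = qc u by apply: (qE_inv Q ec).
    case: (Q_cases Q0 w) => [->|hq]; first (rewrite !Rmult_0_l; lra).
    have hSw : Q w <= S by apply: (@term_le_sum (fun w => relI a c w u && relI b c w v)) => //; rewrite E1 E2.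
    have hSabc : S <= qabc w.
      apply: sum_sub => // w'; rewrite /relI => /andP [/andP [h1 h2] /andP [h3 h4]].
      move: E1 E2; rewrite /relI => /andP [h5 h6] /andP [h7 h8].
      rewrite (ta _ _ _ h5 (sa _ _ h1)) (tb _ _ _ h7 (sb _ _ h3)) (tc _ _ _ h6 (sc _ _ h2)) //.
    have hqc : Q w <= qc u by rewrite /qc -(qE_inv Q ec hcw); apply: (qE_ge Q0).
    rewrite /K Rmult_assoc; apply: Rmult_le_compat_l; first lra.
    have hQuv : 0 <= Q u * Q v by apply: Rmult_le_pos; apply: Q0.
    apply: Rmult_le_compat_l => //.
    apply: Rinv_le_contravar; first by apply: Rmult_lt_0_compat; lra.
    apply: Rmult_le_compat_r; lra.
  rewrite sum_distrl -sum_mkcond -/S.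
  have hRH : 0 <= RH v.
    rewrite /RH; case: (c u v); last lra.
    apply: Rmult_le_pos; first by apply: Rmult_le_pos; apply: Q0.
    by apply: Rinv_ge0; apply: qE_ge0.
  case: (Rle_lt_or_eq_dec _ _ hS0) => [hSp|<-]; last by rewrite Rmult_0_l.
  case: (pickP (fun w => relI a c w u && relI b c w v)) => [w0 hw0|hnone]; last first.
    by move: hSp; rewrite /S big_pred0 //; lra.
  move: hw0; rewrite /relI => /andP [/andP [h1 h2] /andP [h3 h4]].
  have hcuv : c u v by apply: tc (sc _ _ h2) h4.
  have hqcS : S <= qc u.
    apply: sum_sub => // w'; rewrite /relI => /andP [/andP [_ h5] _]; exact: sc.
  rewrite /RH hcuv /K.
  have -> : S * (Q u * Q v * / (S * qc u)) = Q u * Q v * / qc u by field; lra.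
  lra.
apply: (Rle_trans _ (\big[Rplus/0]_(v : T) RH v)); first by apply: sum_le => v _; apply: hin.
have -> : \big[Rplus/0]_(v : T) RH v = Q u * / qc u * qc u.
  rewrite [X in _ = _ * X]/qc /qE -sum_distrr (sum_mkcond (c u)); apply: eq_bigr => v _.
  by rewrite /RH; case: (c u v); ring.
have := qE_ge0 Q0 c u; rewrite -/qc => h.
case: (Rle_lt_or_eq_dec _ _ h) => [hp|<-]; last by rewrite Rmult_0_r; apply: Q0.
have -> : Q u * / qc u * qc u = Q u by field; lra.
lra.
Qed.

Lemma log2_frac x y z t : 0 < x -> 0 < y -> 0 < z -> 0 < t ->
  log2 (x * y * / (z * t)) = log2 x + log2 y - log2 z - log2 t.
Proof.
move=> hx hy hz ht.
rewrite log2_mult; [|by apply: Rmult_lt_0_compat|by apply: Rinv_0_lt_compat; apply: Rmult_lt_0_compat].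
rewrite log2_mult // log2_inv; last by apply: Rmult_lt_0_compat.
rewrite log2_mult //; ring.
Qed.

Lemma submod a b c : eqv a -> eqv b -> eqv c ->
  ent Q (relI (relI a b) c) + ent Q c <= ent Q (relI a c) + ent Q (relI b c).
Proof.
move=> ea eb ec.
have eac := eqvI ea ec; have ebc := eqvI eb ec; have eabc := eqvI (eqvI ea eb) ec.
have pos : forall e, eqv e -> forall w, 0 < Q w -> 0 < qE Q e w.
  by move=> e he w hw; apply: (qE_pos Q0) => //; apply: eqv_refl.
have : \big[Rplus/0]_(w : T) (Q w * log2 (qE Q (relI a c) w * qE Q (relI b c) w *
     / (qE Q (relI (relI a b) c) w * qE Q c w))) <= 0.
  apply: (gibbs Q0).
- move=> w hw; repeat apply: Rmult_lt_0_compat; try (apply: pos => //).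
  by apply: Rinv_0_lt_compat; apply: Rmult_lt_0_compat; apply: pos.
- exact: submod_sum.
have -> : \big[Rplus/0]_(w : T) (Q w * log2 (qE Q (relI a c) w * qE Q (relI b c) w *
     / (qE Q (relI (relI a b) c) w * qE Q c w))) =
   \big[Rplus/0]_(w : T) (Q w * log2 (qE Q (relI a c) w) + Q w * log2 (qE Q (relI b c) w)
      - Q w * log2 (qE Q (relI (relI a b) c) w) - Q w * log2 (qE Q c w)).
  apply: eq_bigr => w _; case: (Q_cases Q0 w) => [->|hw]; first ring.
  by rewrite log2_frac; try (apply: pos => //); ring.
rewrite sum4 !entE; lra.
Qed.

End Gen2.

Lemma INR_gt0 n : (0 < n)%N -> 0 < INR n.
Proof. case: n => [//|k _]; rewrite S_INR; have := pos_INR k; lra. Qed.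

Lemma sum_seq_one (U : Type) (s : seq U) : \big[Rplus/0]_(y <- s) 1 = INR (size s).
Proof.
elim: s => [|y s IH]; first by rewrite big_nil.
rewrite big_cons IH; change (size (y :: s)) with (size s).+1; rewrite S_INR; lra.
Qed.

Section Gen3.
Variable T : finType.
Variable Q : T -> R.
Hypothesis Q0 : forall w, 0 <= Q w.
Implicit Types e a b c g : rel T.

Lemma relf_eqv (U : eqType) (f : T -> U) : eqv (relf f).
Proof.
split => [x|x y|x y z]; rewrite /relf //; first by rewrite eq_sym.
by move=> /eqP -> /eqP ->.
Qed.

Lemma cond_reduce a b c : eqv a -> eqv b -> eqv c -> (forall w w', b w w' -> c w w') ->
  ent Q (relI a b) - ent Q b <= ent Q (relI a c) - ent Q c.
Proof.
move=> ea eb ec hbc; have := submod Q0 ea eb ec.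
rewrite (@ent_ext _ Q (relI (relI a b) c) (relI a b)); last first.
  move=> w w'; rewrite /relI; case: (b w w') (hbc w w') => /=; last by rewrite !andbF.
  by move=> h; rewrite h // !andbT.
rewrite (@ent_ext _ Q (relI b c) b); last first.
  by move=> w w'; rewrite /relI; case: (b w w') (hbc w w') => //= ->.
lra.
Qed.


Lemma fano (J Jh : T -> nat) g : eqv g -> (forall w w', g w w' -> Jh w = Jh w') ->
  ent Q (relI (relf J) g) - ent Q g <=
  \big[Rplus/0]_(w : T) (Q w * (if J w == Jh w then 1 else log2 (2 * INR #|T|))).
Proof.
move=> eg hJh; have [rg sg tg] := eg.
have ejg := eqvI (relf_eqv J) eg.
pose qg := qE Q g; pose qjg := qE Q (relI (relf J) g).
pose N := INR #|T|.
pose r w := if J w == Jh w then / 2 else / (2 * N).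
have hN : forall w : T, 0 < N by move=> w; apply: INR_gt0; apply/card_gt0P; exists w.
have hr : forall w, 0 < r w.
  move=> w; rewrite /r; case: (J w == Jh w); apply: Rinv_0_lt_compat; have := hN w; lra.
have pos : forall e, eqv e -> forall w, 0 < Q w -> 0 < qE Q e w.
  by move=> e he w hw; apply: (qE_pos Q0) => //; apply: eqv_refl.
have hg : \big[Rplus/0]_(w : T) (Q w * log2 (qg w * r w * / qjg w)) <= 0.
  apply: (gibbs Q0).
    move=> w hw; apply: Rmult_lt_0_compat; first apply: Rmult_lt_0_compat.
    - exact: pos.
    - exact: hr.
    - by apply: Rinv_0_lt_compat; apply: pos.
  have -> : \big[Rplus/0]_(w : T) (Q w * (qg w * r w * / qjg w)) =
     \big[Rplus/0]_(u : T) (Q u * \big[Rplus/0]_(w : T)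
         (if g w u then Q w * r w * / qjg w else 0)).
    have -> : \big[Rplus/0]_(w : T) (Q w * (qg w * r w * / qjg w)) =
       \big[Rplus/0]_(w : T) \big[Rplus/0]_(u : T)
         (Q u * (if g w u then Q w * r w * / qjg w else 0)).
      apply: eq_bigr => w _; rewrite /qg /qE (sum_mkcond (g w)).
      transitivity ((Q w * r w * / qjg w) * \big[Rplus/0]_(i : T) (if g w i then Q i else 0)); first ring.
      rewrite -sum_distrr; apply: eq_bigr => u _; case: (g w u); ring.
    rewrite exchange_big /=; apply: eq_bigr => u _; by rewrite sum_distrr.
  apply: sum_le => u _.
  case: (Q_cases Q0 u) => [->|hu]; first lra.
  rewrite -{2}(Rmult_1_r (Q u)); apply: Rmult_le_compat_l; first lra.
  pose S := \big[Rplus/0]_(w | g w u && (J w == Jh u)) Q w.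
  have hS0 : 0 <= S by apply: sum_ge0 => *; apply: Q0.
  apply: (Rle_trans _ (\big[Rplus/0]_(w : T)
      ((if g w u && (J w == Jh u) then Q w else 0) * / (2 * S) + / (2 * N)))).
    apply: sum_le => w _.
    have hN2 : 0 < / (2 * N) by apply: Rinv_0_lt_compat; have := hN w; lra.
    case E1: (g w u) => /=; last lra.
    have hjh : Jh w = Jh u by apply: hJh.
    case: (Q_cases Q0 w) => [->|hw].
      rewrite !Rmult_0_l; case: (J w == Jh u); lra.
    have hqj : Q w <= qjg w by apply: (qE_ge Q0); apply: eqv_refl.
    have hqjp : 0 < qjg w by lra.
    rewrite /r hjh; case E2: (J w == Jh u).
    - have hSw : Q w <= S by apply: (@term_le_sum _ (fun w => g w u && (J w == Jh u))) => //; rewrite E1 E2.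
      have hSq : S <= qjg w.
        apply: sum_sub => // w'; case/andP => h1 /eqP h2.
        rewrite /relI /relf h2 (eqP E2) eqxx /=; apply: tg E1 (sg _ _ h1).
      have : / qjg w <= / S by apply: Rinv_le_contravar; lra.
      rewrite Rinv_mult; have := Rinv_0_lt_compat _ hqjp; have hi2 : 0 < / 2 by lra.
      move=> h1 h2; nra.
    - have : Q w * / qjg w <= 1.
        apply: (Rmult_le_reg_r (qjg w)) => //; rewrite Rmult_assoc Rinv_l; lra.
      move=> h1; have h3 := Rinv_0_lt_compat _ hqjp; nra.
  rewrite sum_split sum_distrl -sum_mkcond -/S sum_const_R.
  have hN1 : 0 < N := hN u.
  have -> : N * / (2 * N) = / 2 by field; lra.
  case: (Rle_lt_or_eq_dec _ _ hS0) => [hSp|<-].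
    have -> : S * / (2 * S) = / 2 by field; lra.
    lra.
  rewrite Rmult_0_l; lra.
have E : \big[Rplus/0]_(w : T) (Q w * log2 (qg w * r w * / qjg w)) =
  \big[Rplus/0]_(w : T) (Q w * log2 (qg w) - Q w * log2 (qjg w)
     - Q w * (if J w == Jh w then 1 else log2 (2 * N))).
  apply: eq_bigr => w _; case: (Q_cases Q0 w) => [->|hw]; first ring.
  have h1 : 0 < qg w by apply: pos.
  have h2 : 0 < qjg w by apply: pos.
  rewrite log2_mult; [|by apply: Rmult_lt_0_compat|by apply: Rinv_0_lt_compat].
  rewrite log2_mult // log2_inv // /r.
  have h2N : 0 < 2 * N by apply: Rmult_lt_0_compat; [lra | exact: hN w].
  have h22 : 0 < 2 by lra.
  case: (J w == Jh w).
    rewrite (log2_inv h22) log2_2; ring.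
  rewrite (log2_inv h2N); ring.
rewrite E in hg; move: hg; rewrite /N /Rminus !sum_split !sum_opp !entE -/qg -/qjg; lra.
Qed.


Lemma sum_nonempty (F : T -> R) : \big[Rplus/0]_(w:T) F w <> 0 -> exists w : T, True.
Proof.
move=> h; case: (pickP (@predT T)) => [w _|h0]; first by exists w.
exfalso; apply: h; apply: big_pred0 => i; exact: h0 i.
Qed.

Lemma ent_le_log (U : eqType) (f : T -> U) :
  \big[Rplus/0]_(w : T) Q w = 1 ->
  ent Q (relf f) <= log2 (INR (size (undup [seq f w | w <- enum T]))).
Proof.
move=> hQ1.
have [w0 _] : exists w : T, True by apply: (sum_nonempty (F := Q)); lra.
set Us := undup _; set N := INR (size Us).
pose q := qE Q (relf f).
have memU : forall w, f w \in Us.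
  by move=> w; rewrite mem_undup; apply: map_f; rewrite mem_enum.
have hN : forall w : T, 0 < N.
  move=> w; apply: INR_gt0; case E: Us (memU w) => [|y s] //.
have pos : forall w, 0 < Q w -> 0 < q w.
  by move=> w hw; apply: (qE_pos Q0) => //; rewrite /relf.
have hsplit : forall F : T -> R, \big[Rplus/0]_(w : T) F w =
   \big[Rplus/0]_(y <- Us) \big[Rplus/0]_(w : T) (if f w == y then F w else 0).
  move=> F; rewrite exchange_big /=; apply: eq_bigr => w _.
  rewrite (bigD1_seq (f w)) ?undup_uniq ?memU //= eqxx big1 /=; first lra.
  by move=> y; rewrite eq_sym => /negbTE ->.
have hg : \big[Rplus/0]_(w : T) (Q w * log2 (/ (N * q w))) <= 0.
  apply: (gibbs Q0).
    move=> w hw; apply: Rinv_0_lt_compat; apply: Rmult_lt_0_compat; [exact: hN w | exact: pos].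
  rewrite hQ1 hsplit.
  have hb : forall y, \big[Rplus/0]_(w : T) (if f w == y then Q w * / (N * q w) else 0)
         <= / N.
    move=> y.
    pose S := \big[Rplus/0]_(w | f w == y) Q w.
    have hS0 : 0 <= S by apply: sum_ge0 => *; apply: Q0.
    have -> : \big[Rplus/0]_(w : T) (if f w == y then Q w * / (N * q w) else 0) =
        \big[Rplus/0]_(w : T) (if f w == y then Q w * / (N * S) else 0).
      apply: eq_bigr => w _; case E: (f w == y) => //.
      congr (_ * / (N * _)); apply: eq_bigl => w'; rewrite /relf (eqP E).
      by rewrite eq_sym.
    rewrite -sum_mkcond sum_distrl -/S.
    case: (Rle_lt_or_eq_dec _ _ hS0) => [hSp|<-].
      have := hN w0 => hN0.
      have -> : S * / (N * S) = / N by field; lra.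
      lra.
    rewrite Rmult_0_l; apply: Rlt_le; apply: Rinv_0_lt_compat; exact: hN w0.
  apply: (Rle_trans _ (\big[Rplus/0]_(y <- Us) / N)); first by apply: sum_le => y _; apply: hb.
  rewrite -(Rmult_1_r (/ N)) sum_distrr sum_seq_one -/N.
  have := hN w0 => hN0; rewrite Rinv_l; lra.
have E : \big[Rplus/0]_(w : T) (Q w * log2 (/ (N * q w))) =
   \big[Rplus/0]_(w : T) (- (Q w * log2 (q w)) - Q w * log2 N).
  apply: eq_bigr => w _; case: (Q_cases Q0 w) => [->|hw]; first ring.
  have h1 := pos w hw; have h2 := hN w.
  rewrite log2_inv; last by apply: Rmult_lt_0_compat.
  rewrite log2_mult //; ring.
rewrite E /Rminus sum_split !sum_opp sum_distrl hQ1 in hg.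
rewrite entE -/q; lra.
Qed.

End Gen3.

Lemma log2_prod (I : finType) (F : I -> R) : (forall i, 0 < F i) ->
  log2 (\big[Rmult/1]_(i : I) F i) = \big[Rplus/0]_(i : I) log2 (F i).
Proof.
move=> h.
suff [_ ->] : 0 < \big[Rmult/1]_(i : I) F i /\
   \big[Rplus/0]_(i : I) log2 (F i) = log2 (\big[Rmult/1]_(i : I) F i) by [].
elim/big_rec2: _ => [|i x y _ [hy ->]]; first by rewrite log2_1; split; lra.
split; first by apply: Rmult_lt_0_compat.
by rewrite log2_mult.
Qed.

Lemma prodD1 (I : finType) (j : I) (P : pred I) (F : I -> R) : P j ->
  \big[Rmult/1]_(i | P i) F i = F j * \big[Rmult/1]_(i | P i && (i != j)) F i.
Proof. exact: bigD1. Qed.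

Lemma sumD1 (I : finType) (j : I) (P : pred I) (F : I -> R) : P j ->
  \big[Rplus/0]_(i | P i) F i = F j + \big[Rplus/0]_(i | P i && (i != j)) F i.
Proof. exact: bigD1. Qed.

Section Source.
Variable m : nat.
Variable X : 'I_m -> finType.
Variable P : Omega X -> R.
Hypothesis P0 : forall x, 0 <= P x.
Hypothesis P1 : \big[Rplus/0]_(x : Omega X) P x = 1.
Variable n : nat.

Notation T := (OmegaN X n).
Notation Q := (@PN m X P n).

Lemma PN_ge0 w : 0 <= Q w.
Proof. rewrite /PN; elim/big_ind: _ => //; [lra | move=> *; apply: Rmult_le_pos => //]. Qed.

Lemma marg (k : 'I_n) (G : Omega X -> R) :
  \big[Rplus/0]_(w : T) (Q w * G (w k)) = \big[Rplus/0]_(x : Omega X) (P x * G x).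
Proof.
pose F (j : 'I_n) (x : Omega X) := if j == k then P x * G x else P x.
have -> : \big[Rplus/0]_(w : T) (Q w * G (w k)) =
  \big[Rplus/0]_(w : T) \big[Rmult/1]_(j : 'I_n) F j (w j).
  apply: eq_bigr => w _; rewrite /PN (prodD1 (j:=k)) //= [in RHS](prodD1 (j:=k)) //= /F eqxx.
  have -> : \big[Rmult/1]_(j | j != k) (if j == k then P (w j) * G (w j) else P (w j)) =
      \big[Rmult/1]_(j | j != k) P (w j).
    by apply: eq_bigr => j /negbTE ->.
  by rewrite !Rmult_assoc [G _ * _]Rmult_comm.
rewrite -(bigA_distr_bigA (fun j x => F j x)) (prodD1 (j:=k)) //= /F eqxx.
rewrite [X in _ * X = _]big1 ?Rmult_1_r // => j /negbTE ->.
exact: P1.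
Qed.

Lemma PN_sum1 : \big[Rplus/0]_(w : T) Q w = 1.
Proof.
rewrite /PN -(bigA_distr_bigA (fun (j : 'I_n) (x : Omega X) => P x)).
by rewrite big1 // => j _; exact: P1.
Qed.


Definition eA (A : {set 'I_m}) : rel (Omega X) := fun x y => [forall i in A, x i == y i].

Lemma relA_iff A (w w' : T) : relA A w w' = [forall k, eA A (w k) (w' k)].
Proof.
apply/idP/idP.
- move/forall_inP => h; apply/forallP => k; apply/forall_inP => i hi.
  by have /eqP/ffunP/(_ k) := h i hi; rewrite !ffunE => ->.
- move/forallP => h; apply/forall_inP => i hi; apply/eqP/ffunP => k; rewrite !ffunE.
  by have /forall_inP/(_ i hi)/eqP := h k.
Qed.

Lemma qE_relA A (w : T) :
  qE Q (relA A) w = \big[Rmult/1]_(k : 'I_n) qE P (eA A) (w k).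
Proof.
rewrite /qE (bigA_distr_big_dep (fun k => eA A (w k)) (fun _ y => P y)).
apply: eq_bigl => w'; rewrite relA_iff; apply/forallP/familyP => h k.
- by have := h k.
- by have := h k.
Qed.

Lemma PN_pos_each (w : T) k : 0 < Q w -> 0 < P (w k).
Proof.
move=> h; case: (Rle_lt_or_eq_dec _ _ (P0 (w k))) => // h0.
move: h; rewrite /PN (prodD1 (j:=k)) // -h0 Rmult_0_l; lra.
Qed.

Lemma Hn_iid A : Hn P (@relA m X n A) = INR n * H1 P A.
Proof.
rewrite /Hn /H1 !entE.
have -> : \big[Rplus/0]_(w : T) (Q w * log2 (qE Q (relA A) w)) =
   \big[Rplus/0]_(k : 'I_n) \big[Rplus/0]_(w : T) (Q w * log2 (qE P (eA A) (w k))).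
  rewrite exchange_big /=; apply: eq_bigr => w _; rewrite sum_distrr.
  case: (Rle_lt_or_eq_dec _ _ (PN_ge0 w)) => [hw|<-]; last by rewrite !Rmult_0_l.
  congr (_ * _); rewrite qE_relA log2_prod // => k.
  apply: (qE_pos P0); first by apply/forall_inP => i _.
  exact: PN_pos_each.
have -> : \big[Rplus/0]_(k : 'I_n) \big[Rplus/0]_(w : T) (Q w * log2 (qE P (eA A) (w k))) =
   \big[Rplus/0]_(k : 'I_n) \big[Rplus/0]_(x : Omega X) (P x * log2 (qE P (eA A) x)).
  by apply: eq_bigr => k _; exact: (marg k (fun x => log2 (qE P (eA A) x))).
rewrite sum_const_R card_ord /eA; ring.
Qed.

End Source.

Lemma sum_const_set (I : finType) (A : {set I}) (c : R) :
  \big[Rplus/0]_(i in A) c = INR #|A| * c.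
Proof.
rewrite big_const; elim: #|A| => [|k IH]; first by rewrite /= Rmult_0_l.
rewrite iterS IH S_INR; ring.
Qed.

Lemma sum_enum (I : finType) (A : {set I}) (F : I -> R) :
  \big[Rplus/0]_(i <- enum A) F i = \big[Rplus/0]_(i in A) F i.
Proof. exact: big_enum. Qed.

Section Source2.
Variable m : nat.
Variable X : 'I_m -> finType.
Variable P : Omega X -> R.
Hypothesis P0 : forall x, 0 <= P x.
Hypothesis P1 : \big[Rplus/0]_(x : Omega X) P x = 1.
Variable n : nat.

Notation T := (OmegaN X n).
Notation Q := (@PN m X P n).
Notation H := (@Hn m X P n).
Notation xA := (@relA m X n).

Let Q0 := @PN_ge0 m X P P0 n.

Lemma relA_eqv (A : {set 'I_m}) : eqv (xA A).
Proof.
split => [w|w w'|w w' w''].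
- by apply/forall_inP => i _.
- by move/forall_inP => h; apply/forall_inP => i hi; rewrite eq_sym h.
- move/forall_inP => h1 /forall_inP h2; apply/forall_inP => i hi.
  by rewrite (eqP (h1 i hi)) h2.
Qed.

Lemma relA_sub (A B : {set 'I_m}) (w w' : T) : A \subset B -> xA B w w' -> xA A w w'.
Proof.
move=> hAB /forall_inP h; apply/forall_inP => i hi; apply: h; exact: (subsetP hAB).
Qed.

Lemma relA_obs (A : {set 'I_m}) i (w w' : T) : i \in A -> xA A w w' -> obs i w = obs i w'.
Proof. by move=> hi /forall_inP /(_ i hi) /eqP. Qed.

Lemma ent_top : H (fun _ _ => true) = 0.
Proof.
rewrite /Hn entE (eq_bigr (fun w => Q w * log2 1)).
  by rewrite log2_1 big1 ?Ropp_0 // => w _; rewrite Rmult_0_r.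
by move=> w _; rewrite /qE PN_sum1.
Qed.

Variable Pi : {set {set 'I_m}}.
Hypothesis hcov : forall i : 'I_m, exists2 B, B \in Pi & i \in B.

Definition Dl (l : rel T) : R :=
  \big[Rplus/0]_(A in Pi) condHn P (xA A) l - condHn P (xA [set: 'I_m]) l.

Lemma Dl_ext l l' : (forall w w', l w w' = l' w w') -> Dl l = Dl l'.
Proof.
move=> h; rewrite /Dl /condHn /Hn (ent_ext _ h).
have hI : forall A, ent Q (relI (xA A) l) = ent Q (relI (xA A) l').
  by move=> A; apply: ent_ext => w w'; rewrite /relI h.
rewrite hI; congr (_ - _); apply: eq_bigr => A _; by rewrite hI.
Qed.

Lemma D_top : Dl (fun _ _ => true) =
  INR n * (\big[Rplus/0]_(A in Pi) H1 P A - H1 P [set: 'I_m]).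
Proof.
have hA : forall A, condHn P (xA A) (fun _ _ => true) = INR n * H1 P A.
  move=> A; rewrite /condHn ent_top Rminus_0_r -(Hn_iid P0 P1).
  by apply: ent_ext => w w'; rewrite /relI andbT.
by rewrite /Dl hA (eq_bigr _ (fun A _ => hA A)) sum_distrr Rmult_minus_distr_l.
Qed.


Lemma D_step (l s : rel T) (B : {set 'I_m}) : eqv l -> eqv s -> B \in Pi ->
  (forall w w', xA B w w' -> l w w' -> s w w') -> Dl (relI l s) <= Dl l.
Proof.
move=> el es hB hBs.
have els := eqvI el es.
have hA : forall A, condHn P (xA A) (relI l s) <= condHn P (xA A) l.
  move=> A; rewrite /condHn /Hn; apply: (cond_reduce Q0) => //; first exact: relA_eqv.
  by move=> w w' /andP [].
have eqB : forall A, A \in Pi -> B \subset A ->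
   condHn P (xA A) (relI l s) = H (relI (xA A) l) - H (relI l s).
  move=> A _ hBA; rewrite /condHn /Hn; congr (_ - _); apply: ent_ext => w w'.
  rewrite /relI; case E1: (xA A w w'); case E2: (l w w') => //=.
  by rewrite (hBs w w') // (relA_sub hBA E1).
have eqM : condHn P (xA [set: 'I_m]) (relI l s) =
      H (relI (xA [set: 'I_m]) l) - H (relI l s).
  rewrite /condHn /Hn; congr (_ - _); apply: ent_ext => w w'.
  rewrite /relI; case E1: (xA [set: 'I_m] w w'); case E2: (l w w') => //=.
  by rewrite (hBs w w') // (relA_sub (subsetT B) E1).
rewrite /Dl (sumD1 (j := B)) // [X in _ <= X - _](sumD1 (j := B)) //.
rewrite eqM (eqB B hB (subxx B)).
have : \big[Rplus/0]_(i in Pi | i != B) condHn P (xA i) (relI l s) <=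
   \big[Rplus/0]_(i in Pi | i != B) condHn P (xA i) l by apply: sum_le => A _; exact: hA A.
rewrite /condHn.
set S1 := \big[Rplus/0]_(i in Pi | i != B) (H (relI (xA i) (relI l s)) - H (relI l s)).
set S2 := \big[Rplus/0]_(i in Pi | i != B) (H (relI (xA i) l) - H l).
lra.
Qed.

Lemma D_run (p : seq (step X n)) (a : T -> seq nat) :
  Dl (relf (fun w => run p w (a w))) <= Dl (relf a).
Proof.
elim: p a => [|st p IH] a /=; first exact: Rle_refl.
apply: (Rle_trans _ _ _ (IH _)).
pose sf := fun w => projT2 st (obs (projT1 st) w) (a w).
rewrite (@Dl_ext _ (relI (relf a) (relf sf))); last first.
  by move=> w w'; rewrite /relf /relI eqseq_rcons.
have [B hB hiB] := hcov (projT1 st).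
apply: (D_step (B := B)) => //; try exact: relf_eqv.
move=> w w' hx /eqP ha; rewrite /relf /sf ha (relA_obs hiB hx) //.
Qed.

Lemma D_transcript (p : seq (step X n)) :
  Dl (relf (transcript p)) <= Dl (fun _ _ => true).
Proof.
have := D_run p (fun _ => [::]).
by rewrite (@Dl_ext (relf (fun _ : T => [::])) (fun _ _ => true)) // => w w'; rewrite /relf eqxx.
Qed.

Definition meetl (s : seq {set 'I_m}) : rel T := fun w w' => all (fun A => xA A w w') s.

Lemma meetl_eqv s : eqv (meetl s).
Proof.
split => [w|w w'|w w' w''] ; rewrite /meetl.
- by apply/allP => A _; apply: eqv_refl; apply: relA_eqv.
- move/allP => h; apply/allP => A hA; have [_ sy _] := relA_eqv A; exact: sy (h A hA).
- move/allP => h1 /allP h2; apply/allP => A hA; have [_ _ tr] := relA_eqv A.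
  exact: tr (h1 A hA) (h2 A hA).
Qed.

Lemma D_nonneg l : eqv l -> 0 <= Dl l.
Proof.
move=> el.
have hs : forall s, H (relI (meetl s) l) - H l <=
    \big[Rplus/0]_(A <- s) condHn P (xA A) l.
  move=> s0; elim: s0 => [|A s IH].
    rewrite big_nil /Hn (@ent_ext _ _ (relI (meetl [::]) l) l) //; first lra.
  rewrite big_cons.
  have := submod Q0 (relA_eqv A) (meetl_eqv s) el.
  rewrite (@ent_ext _ _ (relI (relI (xA A) (meetl s)) l) (relI (meetl (A :: s)) l)) //.
  move: IH; rewrite /condHn /Hn; lra.
have := hs (enum Pi); rewrite sum_enum /Dl /condHn.
have : H (relI (xA [set: 'I_m]) l) <= H (relI (meetl (enum Pi)) l).
  apply: (ent_mono Q0); first by move=> w; apply: eqv_refl; apply: eqvI => //; exact: meetl_eqv.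
  move=> w w' /andP [hm hl]; rewrite /relI hl andbT; apply/forall_inP => i _.
  have [B hB hiB] := hcov i; move/allP: hm => /(_ B); rewrite mem_enum => /(_ hB) hx.
  by rewrite (relA_obs hiB hx).
set S := \big[Rplus/0]_(A in Pi) _.
lra.
Qed.

Lemma D_jf (j f : rel T) : eqv j -> eqv f ->
  Dl (relI j f) <= Dl f +
    \big[Rplus/0]_(A in Pi) (H (relI (xA A) (relI j f)) - H (relI (xA A) f))
    - (INR #|Pi| - 1) * (H (relI j f) - H f).
Proof.
move=> ej ef.
have hM : H (relI (xA [set: 'I_m]) f) <= H (relI (xA [set: 'I_m]) (relI j f)).
  apply: (ent_mono Q0); first by move=> w; apply: eqv_refl; repeat apply: eqvI => //; exact: relA_eqv.
  by move=> w w'; rewrite /relI => /andP [-> /andP [_ ->]].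
have E : \big[Rplus/0]_(A in Pi) condHn P (xA A) f +
    \big[Rplus/0]_(A in Pi) (H (relI (xA A) (relI j f)) - H (relI (xA A) f)) -
    \big[Rplus/0]_(A in Pi) condHn P (xA A) (relI j f) = INR #|Pi| * (H (relI j f) - H f).
  rewrite -sum_const_set /Rminus -sum_opp -!sum_split; apply: eq_bigr => A _.
  rewrite /condHn; ring.
move: E hM; rewrite /Dl /condHn; lra.
Qed.

End Source2.

Lemma INR_expn a k : INR (expn a k) = INR a ^ k.
Proof. elim: k => [|k IH]; first by rewrite expn0. by rewrite expnS mult_INR IH. Qed.

Lemma INR_pred k : (1 <= k)%N -> INR (k - 1)%N = INR k - 1.
Proof. case: k => [//|k _]; rewrite subSS subn0 S_INR; ring. Qed.

Lemma log2_pow x k : 0 < x -> log2 (x ^ k) = INR k * log2 x.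
Proof. move=> hx; rewrite /log2 ln_pow //; rewrite /Rdiv; ring. Qed.

Lemma log2_ge0 x : 1 <= x -> 0 <= log2 x.
Proof. move=> h; rewrite -log2_1; apply: log2_le; lra. Qed.

Section Source3.
Variable m : nat.
Variable X : 'I_m -> finType.
Variable P : Omega X -> R.
Hypothesis P0 : forall x, 0 <= P x.
Hypothesis P1 : \big[Rplus/0]_(x : Omega X) P x = 1.
Variable n : nat.

Notation T := (OmegaN X n).
Notation Q := (@PN m X P n).
Notation H := (@Hn m X P n).
Notation xA := (@relA m X n).
Let Q0 := @PN_ge0 m X P P0 n.
Let Q1 := @PN_sum1 m X P P1 n.

Definition cO := log2 (INR #|Omega X|).

Lemma Omega_nonempty : (0 < #|Omega X|)%N.
Proof.
have [x _] := sum_nonempty (F := P) (ltac:(lra)).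
by apply/card_gt0P; exists x.
Qed.

Lemma cO_ge0 : 0 <= cO.
Proof.
apply: log2_ge0; have := Omega_nonempty; case: #|Omega X| => [//|k _].
rewrite S_INR; have := pos_INR k; lra.
Qed.

Lemma log2_cardT : log2 (INR #|T|) = INR n * cO.
Proof.
have hp : 0 < INR #|Omega X| by apply: INR_gt0; exact: Omega_nonempty.
by rewrite card_ffun card_ord INR_expn (log2_pow _ hp).
Qed.

Lemma err_bound (J Jh : T -> nat) (E : pred T) (delta : R) :
  (forall w, J w != Jh w -> ~~ E w) ->
  \big[Rplus/0]_(w | E w) Q w >= 1 - delta ->
  \big[Rplus/0]_(w : T) (Q w * (if J w == Jh w then 1 else log2 (2 * INR #|T|)))
   <= 1 + delta * (INR n * cO).
Proof.
move=> hE hP.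
have hN : 0 < INR #|T| by apply: INR_gt0; rewrite card_ffun card_ord expn_gt0 Omega_nonempty.
have hL : log2 (2 * INR #|T|) = 1 + INR n * cO.
  by rewrite log2_mult ?log2_2 ?log2_cardT //; lra.
have hc := cO_ge0.
have hnc : 0 <= INR n * cO by apply: Rmult_le_pos => //; apply: pos_INR.
have -> : \big[Rplus/0]_(w : T) (Q w * (if J w == Jh w then 1 else log2 (2 * INR #|T|))) =
   \big[Rplus/0]_(w : T) Q w + \big[Rplus/0]_(w : T) (if J w != Jh w then Q w else 0) * (INR n * cO).
  rewrite -sum_distrl -sum_split; apply: eq_bigr => w _; rewrite hL.
  by case: (J w == Jh w) => /=; ring.
rewrite Q1; apply: Rplus_le_compat_l; apply: Rmult_le_compat_r => //.
rewrite -(sum_mkcond (fun w => J w != Jh w)).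
have h1 : \big[Rplus/0]_(w | J w != Jh w) Q w <= \big[Rplus/0]_(w | ~~ E w) Q w.
  by apply: sum_sub => // w /hE.
have : \big[Rplus/0]_(w : T) Q w =
   \big[Rplus/0]_(w | E w) Q w + \big[Rplus/0]_(w | ~~ E w) Q w.
  exact: (bigID E).
rewrite Q1; lra.
Qed.


Variable Pi : {set {set 'I_m}}.
Hypothesis hcov : forall i : 'I_m, exists2 B, B \in Pi & i \in B.
Hypothesis hne : forall A, A \in Pi -> exists i : 'I_m, i \in A.

Lemma key (p : seq (step X n)) (J : T -> nat) (delta : R)
  (Ji : forall i : 'I_m, {ffun 'I_n -> X i} -> seq nat -> nat) :
  Prob P (fun w : T => [forall i, Ji i (obs i w) (transcript p w) == J w]) >= 1 - delta ->
  Dl P Pi (relI (relf J) (relf (transcript p))) +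
   (INR #|Pi| - 1) * (H (relI (relf J) (relf (transcript p))) - H (relf (transcript p)))
  <= INR n * (\big[Rplus/0]_(A in Pi) H1 P A - H1 P [set: 'I_m]) +
     INR #|Pi| * (1 + delta * (INR n * cO)).
Proof.
move=> hprob.
set f := relf (transcript p); set j := relf J.
have ef : eqv f := relf_eqv _; have ej : eqv j := relf_eqv _.
have h1 := D_jf P0 Pi ej ef.
have h2 := D_transcript P0 hcov p.
rewrite (D_top P0 P1 n Pi) in h2.
have h3 : \big[Rplus/0]_(A in Pi) (H (relI (xA A) (relI j f)) - H (relI (xA A) f))
    <= \big[Rplus/0]_(A in Pi) (1 + delta * (INR n * cO)).
  apply: sum_le => A hA.
  have [i hi] := hne hA.
  pose g := relI (relf (obs i)) f.
  have eg : eqv g by apply: eqvI => //; exact: relf_eqv.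
  pose Jh := fun w : T => Ji i (obs i w) (transcript p w).
  apply: (Rle_trans _ (H (relI j g) - H g)).
    rewrite /Hn (@ent_ext _ _ (relI (xA A) (relI j f)) (relI j (relI (xA A) f))); last first.
      by move=> w w'; rewrite /relI andbCA.
    apply: (cond_reduce Q0) => //; first by apply: eqvI => //; exact: relA_eqv.
    move=> w w' /andP [hx hf]; rewrite /g /relI hf andbT /relf (relA_obs hi hx) //.
  have hinv : forall w w', g w w' -> Jh w = Jh w'.
    move=> w w' /andP [/eqP ho /eqP ht]; by rewrite /Jh ho ht.
  apply: (Rle_trans _ _ _ (fano Q0 J eg hinv)).
    apply: (err_bound (E := fun w : T => [forall i, Ji i (obs i w) (transcript p w) == J w])) => //.
    move=> w hne'; apply/negP => /forallP /(_ i) /eqP h.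
    by move: hne'; rewrite /Jh h eqxx.
rewrite sum_const_set in h3.
rewrite -/f in h2.
set S1 := \big[Rplus/0]_(A in Pi) H1 P A in h2 *.
set S2 := \big[Rplus/0]_(A in Pi) (H (relI (xA A) (relI j f)) - H (relI (xA A) f)) in h1 h3 *.
lra.
Qed.

End Source3.

Section Part.
Variable m : nat.

Lemma valid_cov (Pi : {set {set 'I_m}}) : validp Pi ->
  forall i : 'I_m, exists2 B, B \in Pi & i \in B.
Proof.
case/andP => /and3P [/eqP hc _ _] _ i.
have : i \in cover Pi by rewrite hc inE.
by case/bigcupP => B hB hi; exists B.
Qed.

Lemma valid_ne (Pi : {set {set 'I_m}}) : validp Pi ->
  forall A, A \in Pi -> exists i : 'I_m, i \in A.
Proof.
case/andP => /and3P [_ _ h0] _ A hA.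
have : A != set0 by apply/eqP => E; move: h0; rewrite -E hA.
by case/set0Pn => i hi; exists i.
Qed.

Lemma valid_k (Pi : {set {set 'I_m}}) : validp Pi -> (2 <= #|Pi|)%N.
Proof. by case/andP. Qed.

Lemma Pfine_valid : (2 <= m)%N -> validp (Pfine m).
Proof.
move=> hm; apply/andP; split.
  apply/and3P; split.
  - apply/eqP/setP => i; rewrite inE; apply/bigcupP; exists [set i]; last by rewrite inE.
    by apply/imsetP; exists i.
  - apply/trivIsetP => A B /imsetP [i _ ->] /imsetP [j _ ->] hne.
    rewrite disjoint_sym disjoints1 inE; apply/eqP => E; move: hne; by rewrite E eqxx.
  - apply/imsetP => [[i _ E]]; have : i \in [set i] by rewrite inE.
    by rewrite -E inE.
rewrite /Pfine card_imset; last exact: set1_inj.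
by rewrite cardsT card_ord.
Qed.

End Part.

Lemma exists_min (m : nat) (X : 'I_m -> finType) (P : Omega X -> R) :
  (2 <= m)%N -> exists Pi, validp Pi /\ Defs.Delta P Pi = Icap P.
Proof.
move=> hm; rewrite /Icap.
elim/big_ind: _.
- by exists (Pfine m); split => //; exact: Pfine_valid.
- move=> x y [Px [h1 <-]] [Py [h2 <-]].
  rewrite /Rmin; case: (Rle_dec _ _) => _; [by exists Px | by exists Py].
- by move=> Q hQ; exists Q.
Qed.

Lemma bigmax_bound (I : finType) (p : pred I) (t : I -> R) (M : R) :
  0 <= M -> (forall i, p i -> t i <= M) ->
  0 <= \big[Rmax/0]_(i | p i) t i <= M.
Proof.
move=> hM ht; split.
  elim/big_rec: _ => [|i y _ hy]; first lra.
  by apply: Rle_trans hy (Rmax_r _ _).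
elim/big_rec: _ => [//|i y hi hy].
by apply: Rmax_lub => //; apply: ht.
Qed.

Lemma n_big (e : R) : 0 < e -> exists N : nat, (0 < N)%N /\ forall n : nat, (N <= n)%N -> / INR n < e.
Proof.
move=> he; have [N [hN hN0]] := archimed_cor1 e he.
exists N; split; first by apply/ltP.
move=> n hn; have hN0' : 0 < INR N by apply: lt_0_INR.
apply: Rle_lt_trans hN; apply: Rinv_le_contravar => //; apply: le_INR; exact/leP.
Qed.

Lemma delta_choice (c e : R) : 0 <= c -> 0 < e ->
  exists d, 0 < d < 1 /\ d * c <= e.
Proof.
move=> hc he; exists (Rmin (1/2) (e / (c + 1))); split.
  have hp : 0 < e / (c + 1) by apply: Rdiv_lt_0_compat; lra.
  rewrite /Rmin; destruct (Rle_dec (1/2) (e / (c + 1))) as [h|h]; first lra.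
  have := Rnot_le_lt _ _ h; lra.
apply: (Rle_trans _ (e / (c + 1) * c)).
  apply: Rmult_le_compat_r => //; exact: Rmin_r.
have -> : e / (c + 1) * c = e * (c / (c + 1)) by field; lra.
have : c / (c + 1) <= 1.
  apply: (Rmult_le_reg_r (c + 1)); first lra.
  rewrite /Rdiv Rmult_assoc Rinv_l; lra.
nra.
Qed.

Lemma part1 (m : nat) (X : 'I_m -> finType) (P : Omega X -> R)
  (hm : (2 <= m)%N) (hP0 : forall x, 0 <= P x)
  (hP1 : \big[Rplus/0]_(x : Omega X) P x = 1) F K :
  isSK P F K (Icap P) -> isCIW P (Lrel F K).
Proof.
move=> [hCR hSK] eps heps.
set c := cO X.
have hc : 0 <= c := cO_ge0 hP1.
set e1 := eps / 8.
have he1 : 0 < e1 by rewrite /e1; lra.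
have [d [[hd0 hd1] hdc]] := delta_choice hc (ltac:(lra) : 0 < e1 / 2).
have [N1 hN1] := hSK e1 he1.
have [N2 hN2] := hCR d (conj hd0 hd1).
have [N3 [hN3pos hN3]] := n_big (ltac:(lra) : 0 < e1 / 2).
exists (maxn N1 (maxn N2 N3)) => n /leP hn.
have hn1 : (N1 <= n)%N by apply: leq_trans hn; rewrite leq_maxl.
have hn2 : (N2 <= n)%N by apply: leq_trans hn; rewrite leq_max leq_maxl orbT.
have hn3 : (N3 <= n)%N by apply: leq_trans hn; rewrite leq_max leq_maxr orbT.
have [hMI hHK] := hN1 n hn1.
have [Ji hprob] := hN2 n hn2.
have hinv := hN3 n hn3.
have hnpos : 0 < INR n by apply: lt_0_INR; apply/ltP; apply: leq_trans hN3pos hn3.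
set M := INR n * e1 + e1 + 2 * (1 + d * (INR n * c)).
have [hlo hhi] : 0 <= condMI P (@Lrel _ _ F K n) <= M.
  apply: bigmax_bound.
    rewrite /M; have := Rmult_le_pos _ _ (Rlt_le _ _ hd0) (Rmult_le_pos _ _ (pos_INR n) hc).
    have := Rmult_le_pos _ _ (pos_INR n) (Rlt_le _ _ he1); lra.
  move=> Q /andP [hv hmin].
  have hDI : Defs.Delta P Q <= Icap P by move: hmin; rewrite /Rleb; case: (Rle_dec _ _).
  have hk := valid_k hv.
  have hk1 : INR (#|Q| - 1)%N = INR #|Q| - 1 by apply: INR_pred; apply: leq_trans hk.
  have hkR : 2 <= INR #|Q| by have := le_INR 2 _ (elimT leP hk).
  have := key hP0 hP1 (valid_cov hv) (valid_ne hv) hprob.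
  have hDelta : \big[Rplus/0]_(A in Q) H1 P A - H1 P [set: 'I_m] =
      (INR #|Q| - 1) * Defs.Delta P Q.
    rewrite /Defs.Delta -hk1 -Rmult_assoc Rinv_r ?Rmult_1_l // hk1; lra.
  rewrite hDelta.
  have hHKn : INR n * (Icap P - e1) <= Hn P (relf (K n)).
    have := Rmult_le_compat_l _ _ _ (pos_INR n) (Rge_le _ _ hHK).
    by rewrite -Rmult_assoc Rinv_r ?Rmult_1_l //; lra.
  move: hMI; rewrite /MIn => hMI.
  change (\big[Rplus/0]_(A in Q) condHn P (relA A) (@Lrel _ _ F K n) -
     condHn P (relA [set: 'I_m]) (@Lrel _ _ F K n)) with (Dl P Q (@Lrel _ _ F K n)).
  rewrite /Lrel.
  set D := Dl P Q _.
  set HJF := Hn P (relI (relf (K n)) (relf (transcript (F n)))) in hMI *.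
  set HF := Hn P (relf (transcript (F n))) in hMI *.
  set HK := Hn P (relf (K n)) in hMI hHKn *.
  set k := INR #|Q| in hkR hk1 *.
  move=> hkey; rewrite -/c in hkey.
  rewrite hk1 -/k.
  have hnc : 0 <= d * (INR n * c) by apply: Rmult_le_pos; [lra | apply: Rmult_le_pos => //; apply: pos_INR].
  have hDb : D <= (k - 1) * (INR n * e1 + e1) + k * (1 + d * (INR n * c)).
    have : (k - 1) * (INR n * Defs.Delta P Q) <= (k - 1) * (INR n * Icap P).
      apply: Rmult_le_compat_l; first lra.
      apply: Rmult_le_compat_l => //; exact: pos_INR.
    have : (k - 1) * (INR n * (Icap P - e1)) <= (k - 1) * HK.
      by apply: Rmult_le_compat_l; first lra.
    have : (k - 1) * (HK + HF - HJF) <= (k - 1) * e1 by apply: Rmult_le_compat_l; lra.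
    lra.
  apply: (Rmult_le_reg_l (k - 1)); first lra.
  rewrite -Rmult_assoc Rinv_r; last lra.
  rewrite Rmult_1_l /M.
  have : k * (1 + d * (INR n * c)) <= (k - 1) * (2 * (1 + d * (INR n * c))) by nra.
  nra.
rewrite /Rdist Rminus_0_r Rabs_pos_eq; last first.
  by apply: Rmult_le_pos => //; apply: Rlt_le; apply: Rinv_0_lt_compat.
apply: (Rle_lt_trans _ (/ INR n * M)).
  by apply: Rmult_le_compat_l => //; apply: Rlt_le; apply: Rinv_0_lt_compat.
have -> : / INR n * M = e1 + e1 * / INR n + 2 * / INR n + 2 * (d * c).
  rewrite /M; field; lra.
have : e1 * / INR n <= e1.
  have : / INR n <= 1.
    rewrite -Rinv_1; apply: Rinv_le_contravar; first lra.
    have := le_INR 1 n (elimT leP (leq_trans hN3pos hn3)); rewrite /=; lra.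
  nra.
rewrite /e1 in hinv hdc *; lra.
Qed.

Lemma part2 (m : nat) (X : 'I_m -> finType) (P : Omega X -> R)
  (hm : (2 <= m)%N) (hP0 : forall x, 0 <= P x)
  (hP1 : \big[Rplus/0]_(x : Omega X) P x = 1) F J (b : R) :
  rate_le F b -> isCR P F J ->
  forall eps, 0 < eps -> exists N, forall n, (N <= n)%N ->
    / INR n * Hn P (@Lrel _ _ F J n) <= b + Icap P + eps.
Proof.
move=> hrate hCR eps heps.
have [Q [hv hDI]] := exists_min P hm.
set c := cO X.
have hc : 0 <= c := cO_ge0 hP1.
set e1 := eps / 4.
have he1 : 0 < e1 by rewrite /e1; lra.
have [d [[hd0 hd1] hdc]] := delta_choice hc (ltac:(lra) : 0 < e1 / 2).
have [N1 hN1] := hrate e1 he1.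
have [N2 hN2] := hCR d (conj hd0 hd1).
have [N3 [hN3pos hN3]] := n_big (ltac:(lra) : 0 < e1 / 2).
exists (maxn N1 (maxn N2 N3)) => n hn.
have hn1 : (N1 <= n)%N by apply: leq_trans hn; rewrite leq_maxl.
have hn2 : (N2 <= n)%N by apply: leq_trans hn; rewrite leq_max leq_maxl orbT.
have hn3 : (N3 <= n)%N by apply: leq_trans hn; rewrite leq_max leq_maxr orbT.
have hlog := hN1 n hn1.
have [Ji hprob] := hN2 n hn2.
have hinv := hN3 n hn3.
have hnpos : 0 < INR n by apply: lt_0_INR; apply/ltP; apply: leq_trans hN3pos hn3.
have hk := valid_k hv.
have hk1 : INR (#|Q| - 1)%N = INR #|Q| - 1 by apply: INR_pred; apply: leq_trans hk.
have hkR : 2 <= INR #|Q| by have := le_INR 2 _ (elimT leP hk).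
have := key hP0 hP1 (valid_cov hv) (valid_ne hv) hprob.
have hDelta : \big[Rplus/0]_(A in Q) H1 P A - H1 P [set: 'I_m] =
    (INR #|Q| - 1) * Defs.Delta P Q.
  rewrite /Defs.Delta -hk1 -Rmult_assoc Rinv_r ?Rmult_1_l // hk1; lra.
rewrite hDelta hDI -/c.
have hD0 := D_nonneg hP0 (valid_cov hv)
   (eqvI (relf_eqv (J n)) (relf_eqv (transcript (F n)))).
have hF := ent_le_log (PN_ge0 hP0 (n:=n)) (transcript (F n)) (PN_sum1 hP1 n).
rewrite /Lrel.
set D := Dl P Q _ in hD0 *.
set HJF := Hn P (relI (relf (J n)) (relf (transcript (F n)))).
set HF := Hn P (relf (transcript (F n))).
set L := log2 _ in hF.
change (ent (PN P (n:=n)) (relf (transcript (F n)))) with HF in hF.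
set k := INR #|Q| in hkR *.
move=> hkey.
have hnc : 0 <= d * (INR n * c) by apply: Rmult_le_pos; [lra | apply: Rmult_le_pos => //; apply: pos_INR].
have hJF : HJF - HF <= INR n * Icap P + 2 * (1 + d * (INR n * c)).
  apply: (Rmult_le_reg_l (k - 1)); first lra.
  have : k * (1 + d * (INR n * c)) <= (k - 1) * (2 * (1 + d * (INR n * c))) by nra.
  lra.
have hL : / INR n * L <= b + e1 by exact: hlog.
apply: (Rle_trans _ (/ INR n * (L + INR n * Icap P + 2 * (1 + d * (INR n * c))))).
  apply: Rmult_le_compat_l; first by apply: Rlt_le; apply: Rinv_0_lt_compat.
  lra.
have -> : / INR n * (L + INR n * Icap P + 2 * (1 + d * (INR n * c))) =
   / INR n * L + Icap P + 2 * / INR n + 2 * (d * c) by field; lra.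
rewrite /e1 in hinv hdc hL; lra.
Qed.

Unset Implicit Arguments.
Theorem theorem1 (m : nat) (X : 'I_m -> finType) (P : Omega X -> R)
  (hm : (2 <= m)%N)
  (hP0 : forall x, 0 <= P x)
  (hP1 : \big[Rplus/0]_(x : Omega X) P x = 1) :
  inf_le (CIcommSet P) (SKcommSet P) /\
  inf_le (fun x => exists c, CIrateSet P c /\ x = c - Icap P) (CIcommSet P).
Proof.
split.
- move=> b [hb [F [K [hrate hSK]]]] eps heps.
  exists b; split; last lra.
  split => //; exists F, K; split => //; split; first by case: hSK.
  exact: (part1 hm hP0 hP1 hSK).
- move=> b [hb [F [J [hrate [hCR hCIW]]]]] eps heps.
  exists b; split; last lra.
  exists (b + Icap P); split; last ring.
  exists F, J; split; first by split.
  move=> e he; have [N hN] := part2 hm hP0 hP1 hrate hCR he.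
  by exists N => n hn; apply: hN.
Qed.
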